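(* Let $C$ be a finite set of conditional constructor set constraints. Then $C$ is unsatisfiable (has no solution) if and only if its saturation $\mathrm{Sat}(C)$ is trivially unsatisfiable, i.e. $\mathrm{Sat}(C)$ contains the constraint $\emptyset \mathbin{?} k \in \emptyset$ for some constructor $k$.
   Context: Fix a finite set $\underline{D}$ of datatype identifiers. Each $d \in \underline{D}$ has a finite set $\mathrm{Con}(d)$ of constructors. There is a countable supply of refinement variables $X, Y, Z, \dots$. An assignment $\theta$ maps each refinement variable $X$ to a function that sends each $d \in \underline{D}$ to a subset $\theta(X)(d) \subseteq \mathrm{Con}(d)$. A constructor set expression over $d$ is either a finite set $\{k_1,\dots,k_m\} \subseteq \mathrm{Con}(d)$ or a pair $X(d)$. Its meaning is $\theta[\![X(d)]\!] = \theta(X)(d)$ and $\theta[\![\{k_1,\dots,k_m\}]\!] = \{k_1,\dots,k_m\}$. An inclusion constraint $S_1 \subseteq S_2$ relates two expressions over the same $d$, and $k \in S$ abbreviates $\{k\} \subseteq S$. A (conditional) constraint $\phi \mathbin{?} S_1 \subseteq S_2$ consists of a finite set $\phi$ (the guard) of inclusions of the form $k \in X(d)$ together with an inclusion $S_1 \subseteq S_2$ (the body). $\theta$ satisfies $\phi \mathbin{?} S_1 \subseteq S_2$ if the following holds: whenever $k \in \theta(X)(d)$ for every $k \in X(d)$ in $\phi$, then $\theta[\![S_1]\!] \subseteq \theta[\![S_2]\!]$. A solution of a set $C$ is an assignment satisfying every constraint of $C$, and $C$ is satisfiable if it has a solution. A constraint is atomic if its body has one of the forms $X(d) \subseteq Y(d)$,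 $X(d) \subseteq \{k_1,\dots,k_m\}$, $k \in X(d)$, or $k \in \emptyset$. An atomic constraint is trivially unsatisfiable if it is $\emptyset \mathbin{?} k \in \emptyset$, and a set is trivially unsatisfiable if it contains such a constraint. Every constraint is converted to an equivalent finite set of atomic constraints with the same guard, as follows. A body $\{k_1,\dots,k_m\} \subseteq S$ is split into the bodies $k_i \in S$. A body $k \in \{k_1,\dots,k_m\}$ is dropped if $k$ is one of the $k_i$, and otherwise becomes $k \in \emptyset$. The saturation rules, with conclusions converted to atomic form, are: - (Transitivity) from $\phi \mathbin{?} S_1 \subseteq S_2$ and $\psi \mathbin{?} S_2 \subseteq S_3$, derive $\phi \cup \psi \mathbin{?} S_1 \subseteq S_3$; - (Satisfaction) from $\phi \mathbin{?} k \in X(d)$ and $\psi \cup \{k \in X(d)\} \mathbin{?} S_1 \subseteq S_2$, derive $\phi \cup \psi \mathbin{?} S_1 \subseteq S_2$; - (Weakening) from $\phi \mathbin{?} X(d) \subseteq Y(d)$ and $\psi \cup \{k \in Y(d)\} \mathbin{?} S_1 \subseteq S_2$, derive $\phi \cup \psi \cup \{k \in X(d)\} \mathbin{?} S_1 \subseteq S_2$. $\mathrm{Sat}(C)$ is the atomic constraint set obtained from (the atomic form of) $C$ by iteratively applying these rules until closure. *)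

(* Defs.v *)
From HB Require Import structures.
From mathcomp Require Import all_boot.
From mathcomp Require Import finmap.
From Stdlib Require List.

Set Implicit Arguments.
Unset Strict Implicit.
Unset Printing Implicit Defensive.

Local Open Scope fset_scope.

(* Datatype identifiers: a finite type D; constructors of d : Con d (finite).
   Refinement variables: nat.  *)

Section Constraints.
Context {D : finType} {Con : D -> finType}.

Definition assignment := nat -> forall d : D, {set Con d}.

Inductive cexpr (d : D) : Type :=
| CSet : {set Con d} -> cexpr d
| CVar : nat -> cexpr d.

Definition eval (th : assignment) (d : D) (S : cexpr d) : {set Con d} :=
  match S with CSet ks => ks | CVar X => th X d end.

(* A guard atom  k \in X(d)  is represented as (X, existT d k). *)
Definition atom : choiceType := (nat * {d : D & Con d})%type.

Definition atom_holds (th : assignment) (a : atom) : Prop :=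
  tagged a.2 \in th a.1 (tag a.2).

Definition mkatom (X : nat) (d : D) (k : Con d) : atom := (X, Tagged Con k).

Record constr : Type := Constr {
  guard : {fset atom};
  cdt : D;
  lhs : cexpr cdt;
  rhs : cexpr cdt }.

Definition satisfies (th : assignment) (c : constr) : Prop :=
  (forall a, a \in guard c -> atom_holds th a) ->
  eval th (lhs c) \subset eval th (rhs c).

Definition solution (th : assignment) (C : seq constr) : Prop :=
  forall c, List.In c C -> satisfies th c.

Definition satisfiable (C : seq constr) : Prop := exists th, solution th C.

Definition atomize_mem (phi : {fset atom}) (d : D) (k : Con d) (S : cexpr d)
  : seq constr :=
  match S with
  | CVar Y => [:: Constr phi (CSet [set k]) (CVar d Y)]
  | CSet ks => if k \in ks then [::]
               else [:: Constr phi (CSet [set k]) (CSet (set0 : {set Con d}))]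
  end.

Definition atomize (c : constr) : seq constr :=
  match c with
  | @Constr phi d S1 S2 =>
    match S1 with
    | CVar _ => [:: c]
    | CSet ks => flatten [seq atomize_mem phi k S2 | k <- enum ks]
    end
  end.

Inductive Sat (C : seq constr) : constr -> Prop :=
| Sat_base : forall c c', List.In c C -> List.In c' (atomize c) -> Sat C c'
| Sat_trans : forall (phi psi : {fset atom}) (d : D) (S1 S2 S3 : cexpr d) c',
    Sat C (Constr phi S1 S2) -> Sat C (Constr psi S2 S3) ->
    List.In c' (atomize (Constr (phi `|` psi) S1 S3)) -> Sat C c'
| Sat_satisf : forall (phi psi : {fset atom}) (d : D) (k : Con d) (X : nat)
    (d' : D) (S1 S2 : cexpr d') c',
    Sat C (Constr phi (CSet [set k]) (CVar d X)) ->
    Sat C (Constr (psi `|` [fset mkatom X k]) S1 S2) ->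
    List.In c' (atomize (Constr (phi `|` psi) S1 S2)) -> Sat C c'
| Sat_weaken : forall (phi psi : {fset atom}) (d : D) (k : Con d) (X Y : nat)
    (d' : D) (S1 S2 : cexpr d') c',
    Sat C (Constr phi (CVar d X) (CVar d Y)) ->
    Sat C (Constr (psi `|` [fset mkatom Y k]) S1 S2) ->
    List.In c' (atomize (Constr (phi `|` psi `|` [fset mkatom X k]) S1 S2)) ->
    Sat C c'.

Definition triv_unsat_constr (d : D) (k : Con d) : constr :=
  Constr fset0 (CSet [set k]) (CSet (set0 : {set Con d})).

Definition trivially_unsat (C : seq constr) : Prop :=
  exists (d : D) (k : Con d), Sat C (triv_unsat_constr k).

End Constraints.

(* Main.v *)
Require Import Defs.
From mathcomp Require Import all_boot.
From mathcomp Require Import finmap.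
From Stdlib Require List.
From Stdlib Require Import Classical ClassicalEpsilon.

Set Implicit Arguments.
Unset Strict Implicit.
Unset Printing Implicit Defensive.
Local Open Scope fset_scope.

Section Proofs.
Variables (D : finType) (Con : D -> finType).
Notation constr := (@constr D Con).
Notation assignment := (@assignment D Con).
Notation satisfies := (@satisfies D Con).
Notation solution := (@solution D Con).
Notation Sat := (@Sat D Con).
Notation trivially_unsat := (@trivially_unsat D Con).
Notation atom_holds := (@atom_holds D Con).

Lemma In_flat (A B : Type) (f : A -> seq B) (s : seq A) y :
  List.In y (flatten [seq f x | x <- s]) <-> exists x, List.In x s /\ List.In y (f x).
Proof.
elim: s => [|x s IH] /=; first by split => // [[x []]].
rewrite List.in_app_iff IH; split.
- case=> [H|[z [H1 H2]]]; first by exists x; auto.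
  by exists z; auto.
- case=> z [[<-|H1] H2]; first by left. by right; exists z.
Qed.

Lemma In_mem (T : eqType) (x : T) s : List.In x s -> x \in s.
Proof. elim: s => //= y s IH [->|H]; rewrite in_cons ?eqxx //; by rewrite IH ?orbT. Qed.

Lemma mem_In (T : eqType) (x : T) s : x \in s -> List.In x s.
Proof.
elim: s => //= y s IH; rewrite in_cons => /orP [/eqP->|H]; [by left|right; auto].
Qed.

Definition atomic (c : constr) : Prop :=
  match lhs c with
  | CVar _ => True
  | CSet ks => exists k, ks = [set k] /\
      match rhs c with CVar _ => True | CSet ks' => ks' = set0 end
  end.

Lemma atomic_atomize phi d (S1 S2 : cexpr d) :
  atomic (Constr phi S1 S2) -> forall psi,
  atomize (Constr psi S1 S2) = [:: Constr psi S1 S2].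
Proof.
case: S1 => [ks|X] //=; case=> /= k [-> H] psi.
rewrite enum_set1 /=; simpl in H.
case: S2 H => [ks'|Y] //= ->; by rewrite in_set0.
Qed.

Lemma atomize_atomic c c' : List.In c' (atomize c) -> atomic c'.
Proof.
case: c => phi d [ks|X] S2 /=; last by case=> // <-.
move/In_flat=> [k [_]]; case: S2 => [ks'|Y] /=.
- case: (k \in ks') => //= [[<-|//]]; by exists k.
- case=> // <-; by exists k.
Qed.

Lemma Sat_atomic C c : Sat C c -> atomic c.
Proof. by case=> *; apply: atomize_atomic; eauto. Qed.

Lemma atomize_sound th c c' : satisfies th c -> List.In c' (atomize c) -> satisfies th c'.
Proof.
case: c => phi d [ks|X] S2 /=; last by move=> H [<-|].
move=> H /In_flat [k [/In_mem Hk]]; rewrite mem_enum in Hk.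
case: S2 H => [ks'|Y] /= H.
- case E: (k \in ks') => //=; case=> [<-|//] /= G.
  by move: (subsetP (H G) k Hk); rewrite E.
- case=> // <- /= G; rewrite sub1set; exact: (subsetP (H G) k Hk).
Qed.

Lemma atomize_complete th c :
  (forall c', List.In c' (atomize c) -> satisfies th c') -> satisfies th c.
Proof.
case: c => phi d [ks|X] S2 H; last by apply: H; left.
have Hin : forall k, k \in ks -> forall c', List.In c' (atomize_mem phi k S2) -> satisfies th c'.
  move=> k Hk c' Hc'; apply: H; apply/In_flat; exists k; split => //.
  by apply: mem_In; rewrite mem_enum.
clear H; move: Hin; case: S2 => [ks'|Y] Hin G; apply/subsetP => k Hk /=.
- case E: (k \in ks'); first by [].
  have := Hin k Hk (Constr phi (CSet [set k]) (CSet set0)); rewrite /= E.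
  by move=> /(_ (or_introl erefl) G); rewrite /= sub1set in_set0.
- have := Hin k Hk (Constr phi (CSet [set k]) (CVar d Y)).
  by move=> /(_ (or_introl erefl) G); rewrite /= sub1set.
Qed.

Lemma Sat_sound th C c : solution th C -> Sat C c -> satisfies th c.
Proof.
move=> Hs; elim=> {c}.
- move=> c c' Hc Hc'; apply: atomize_sound Hc'; exact: Hs.
- move=> phi psi d S1 S2 S3 c' _ H1 _ H2; apply: atomize_sound => G /=.
  apply: subset_trans (H1 _) (H2 _) => a Ha; apply: G; by rewrite in_fsetU Ha ?orbT.
- move=> phi psi d k X d' S1 S2 c' _ H1 _ H2; apply: atomize_sound => G /=.
  apply: H2 => a; rewrite in_fsetU in_fset1 => /orP [Ha|/eqP->].
  + by apply: G; rewrite in_fsetU Ha orbT.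
  + have := H1 (fun a Ha => G a ltac:(by rewrite in_fsetU Ha)).
    by rewrite /= sub1set.
- move=> phi psi d k X Y d' S1 S2 c' _ H1 _ H2; apply: atomize_sound => G /=.
  apply: H2 => a; rewrite in_fsetU in_fset1 => /orP [Ha|/eqP->].
  + by apply: G; rewrite !in_fsetU Ha orbT.
  + have HX := G (mkatom X k) ltac:(by rewrite in_fsetU in_fset1 eqxx orbT).
    have := H1 (fun a Ha => G a ltac:(by rewrite !in_fsetU Ha)).
    by move/subsetP; apply.
Qed.

Definition pb (P : Prop) : bool :=
  if excluded_middle_informative P then true else false.

Lemma pbP (P : Prop) : pb P <-> P.
Proof. rewrite /pb; case: excluded_middle_informative => //. Qed.

Section Complete.
Variable C : seq constr.
Hypothesis nontriv : ~ trivially_unsat C.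

Definition th0 : assignment := fun X d =>
  [set k : Con d | pb (Sat C (Constr fset0 (CSet [set k]) (CVar d X)))].

Lemma th0P X d k : k \in th0 X d <-> Sat C (Constr fset0 (CSet [set k]) (CVar d X)).
Proof. by rewrite /th0 inE pbP. Qed.

Lemma remove_guard n : forall phi d (S1 S2 : cexpr d), #|` phi| = n ->
  Sat C (Constr phi S1 S2) -> (forall a, a \in phi -> atom_holds th0 a) ->
  Sat C (Constr fset0 S1 S2).
Proof.
elim: n => [|n IH] phi d S1 S2 Hn HS G.
  by move/eqP: Hn; rewrite cardfs_eq0 => /eqP Hn; rewrite Hn in HS.
have : (0 < #|` phi|)%N by rewrite Hn.
rewrite cardfs_gt0 => /fset0Pn [a Ha].
have Hphi : phi = (phi `\ a) `|` [fset a].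
  apply/fsetP => b; rewrite in_fsetU in_fsetD1 in_fset1.
  by case: (eqVneq b a) => [->|]; rewrite ?Ha ?orbF.
move: (G a Ha); case: a Ha Hphi => X [d' k] Ha Hphi /th0P Hk.
have HA := Sat_atomic HS.
rewrite Hphi in HS.
have HS' : Sat C (Constr (phi `\ (X, Tagged Con k)) S1 S2).
  apply: (@Sat_satisf _ _ C fset0 _ d' k X d S1 S2 _ Hk HS).
  by rewrite (atomic_atomize HA) fset0U; left.
apply: IH HS' _.
- by move: Hn; rewrite (cardfsD1 (X, Tagged Con k) phi) Ha => -[].
- by move=> b; rewrite in_fsetD1 => /andP [_]; apply: G.
Qed.

Lemma th0_Sat c : Sat C c -> satisfies th0 c.
Proof.
case: c => phi d S1 S2 HS G.
have HA := Sat_atomic HS.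
have H0 := remove_guard erefl HS G.
clear HS G; case: S1 H0 HA => [ks|X] H0 HA.
- case: HA => /= k [Eks HR]; subst ks.
  case: S2 H0 HR => [ks'|Y] H0 HR /=.
  + subst ks'; exfalso; apply: nontriv; by exists d, k.
  + by rewrite sub1set; apply/th0P.
- clear HA; case: S2 H0 => [ks'|Y] H0; apply/subsetP => /= k /th0P Hk.
  + have T := @Sat_trans _ _ C fset0 fset0 d (CSet [set k]) (CVar d X) (CSet ks').
    case E: (k \in ks') => //; exfalso; apply: nontriv; exists d, k.
    apply: (T _ Hk H0) => /=; rewrite enum_set1 /= E fsetU0; by left.
  + have T := @Sat_trans _ _ C fset0 fset0 d (CSet [set k]) (CVar d X) (CVar d Y).
    apply/th0P; apply: (T _ Hk H0); rewrite /= enum_set1 /= fsetU0; by left.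
Qed.

Lemma th0_solution : solution th0 C.
Proof.
move=> c Hc; apply: atomize_complete => c' Hc'; apply: th0_Sat.
exact: Sat_base Hc Hc'.
Qed.
End Complete.
End Proofs.

Theorem theorem8p4 (D : finType) (Con : D -> finType) (C : seq (@constr D Con)) :
  ~ satisfiable C <-> trivially_unsat C.
Proof.
split.
- move=> H; apply: NNPP => N; apply: H; exists (th0 C); exact: th0_solution.
- move=> [d [k HT]] [th Hth].
  have := Sat_sound Hth HT (fun a Ha => False_ind _ ltac:(by rewrite in_fset0 in Ha)).
  by rewrite /= sub1set in_set0.
Qed.
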